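(* Let $a^\circ_{n,k}(1423)$ be the number of cyclic permutations $\pi\in\mathfrak S_n$ whose one-line notation avoids $\delta_k=k(k-1)\cdots21$ and such that every cyclic rotation of the cycle form $C(\pi)$ avoids $1423$. Then for $n\ge3$, $a^\circ_{n,3}(1423)=2^{n-2}$, and for $k\ge4$, $a^\circ_{n,k}(1423)=F_{2n-3}$, where $F_m$ is the $m$th Fibonacci number ($F_1=F_2=1$).
   Context: A permutation $\pi\in\mathfrak S_n$ is cyclic if it consists of a single $n$-cycle. For cyclic $\pi$, $C(\pi)=(1,c_2,\dots,c_n)$ with $c_2=\pi(1)$, $c_{i+1}=\pi(c_i)$; its cyclic rotations are the sequences $c_ic_{i+1}\cdots c_nc_1\cdots c_{i-1}$ (with $c_1=1$). A sequence avoids a pattern $\sigma\in\mathfrak S_m$ if no subsequence of length $m$ is in the same relative order as $\sigma$. The one-line notation of $\pi$ is $\pi_1\cdots\pi_n$, $\pi_i=\pi(i)$. *)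

(* Defs.v *)
From mathcomp Require Import all_boot all_fingroup.
Set Implicit Arguments. Unset Strict Implicit. Unset Printing Implicit Defensive.

Definition same_order (t sg : seq nat) : bool :=
  (size t == size sg) &&
  all (fun i => all (fun j =>
        (nth 0 t i < nth 0 t j) == (nth 0 sg i < nth 0 sg j))
       (iota 0 (size sg))) (iota 0 (size sg)).

Definition avoids (s sg : seq nat) : bool :=
  [forall m : (size s).-tuple bool, ~~ same_order (mask m s) sg].

(* Permutations of {1,...,n} are represented by 'S_n acting on {0,...,n-1};
   value i of 'I_n stands for i+1. *)
Definition one_line n (p : 'S_n) : seq nat := [seq (p i).+1 | i <- enum 'I_n].

Definition is_cyclic n (p : 'S_n) : bool := #|porbits p| == 1.

Definition cycle_form n : 'S_n -> seq nat :=
  match n with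
  | 0 => fun _ => [::]
  | m.+1 => fun p => [seq (((p ^+ j)%g : 'S_m.+1) ord0).+1 | j <- iota 0 m.+1]
  end.

Definition rotations_avoid n (p : 'S_n) (sg : seq nat) : bool :=
  [forall i : 'I_n, avoids (rot i (cycle_form p)) sg].

Definition delta (k : nat) : seq nat := rev (iota 1 k).

Definition pat1423 : seq nat := [:: 1; 4; 2; 3].

Definition a_circ (n k : nat) : nat :=
  #|[set p : 'S_n | [&& is_cyclic p, avoids (one_line p) (delta k)
                      & rotations_avoid p pat1423]]|.

Fixpoint fib (m : nat) : nat :=
  match m with
  | 0 => 0
  | 1 => 1
  | (m'.+1 as m1).+1 => fib m1 + fib m'
  end.

(* Main.v *)
Require Import Defs.
From mathcomp Require Import all_boot all_fingroup zify.
Set Implicit Arguments. Unset Strict Implicit. Unset Printing Implicit Defensive.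

Lemma subseq_catE (T : eqType) (t X Y : seq T) :
  subseq t (X ++ Y) -> exists t1 t2, [/\ t = t1 ++ t2, subseq t1 X & subseq t2 Y].
Proof.
elim: X t => [|x X IH] t /=; first by move=> H; exists [::], t; split.
case: t => [|a t]; first by move=> _; exists [::], [::]; split; rewrite ?sub0seq.
rewrite /=; case: eqP => [->|ne] H.
  have [t1 [t2 [-> H1 H2]]] := IH _ H.
  by exists (x :: t1), t2; rewrite /= eqxx.
have [t1 [t2 [E H1 H2]]] := IH _ H.
exists t1, t2; split => //; exact: subseq_trans H1 (subseq_cons _ _).
Qed.

Lemma subseq_tdE (T : eqType) (t1 t2 s : seq T) :
  subseq (t1 ++ t2) s -> exists i, subseq t1 (take i s) /\ subseq t2 (drop i s).
Proof.
elim: s t1 => [|x s IH] t1.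
  by case: t1 => // ; case: t2 => // _; exists 0.
case: t1 => [|a t1] H; first by exists 0; rewrite take0 drop0 sub0seq.
move: H; rewrite /=; case: eqP => [->|ne] H.
  have [i [H1 H2]] := IH _ H; exists i.+1; by rewrite /= eqxx.
have [i [H1 H2]] := IH (a :: t1) H; exists i.+1; rewrite /=; case: eqP => // _; split => //.
Qed.

Lemma avoids_sub s sg t : avoids s sg -> subseq t s -> ~~ same_order t sg.
Proof.
move=> /forallP A /subseqP [m Hm ->].
have Hm' : size m == size s by apply/eqP.
exact: (A (Tuple Hm')).
Qed.

Lemma sub_avoids s sg : (forall t, subseq t s -> ~~ same_order t sg) -> avoids s sg.
Proof. by move=> H; apply/forallP => m; apply: H; exact: mask_subseq. Qed.

Lemma so231 a b c : same_order [:: a; b; c] [:: 2; 3; 1] = (c < a < b).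
Proof.
rewrite /same_order /= !ltnn /=.
case: (ltngtP a b); case: (ltngtP a c); case: (ltngtP b c) => //= *; lia.
Qed.
Lemma so1423 a b c d : same_order [:: a; b; c; d] [:: 1; 4; 2; 3] = [&& a < c, c < d & d < b].
Proof.
rewrite /same_order /= !ltnn /=.
case: (ltngtP a b); case: (ltngtP a c); case: (ltngtP b c); case: (ltngtP a d); case: (ltngtP b d); case: (ltngtP c d) => //= *; lia.
Qed.
Lemma so321 a b c : same_order [:: a; b; c] (delta 3) = (c < b < a).
Proof.
rewrite /same_order /delta /= !ltnn /=.
case: (ltngtP a b); case: (ltngtP a c); case: (ltngtP b c) => //= *; lia.
Qed.

Lemma size_same_order t sg : same_order t sg -> size t = size sg.
Proof. by case/andP => /eqP. Qed.

Lemma same_order3 t sg : size sg = 3 -> same_order t sg -> exists a b c, t = [:: a; b; c].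
Proof.
move=> Hs /size_same_order; rewrite Hs.
by case: t => [|a [|b [|c [|]]]] // _; exists a, b, c.
Qed.
Lemma same_order4 t sg : size sg = 4 -> same_order t sg -> exists a b c d, t = [:: a; b; c; d].
Proof.
move=> Hs /size_same_order; rewrite Hs.
by case: t => [|a [|b [|c [|d [|]]]]] // _; exists a, b, c, d.
Qed.

Definition has231 (s : seq nat) := exists a b c, subseq [:: a; b; c] s /\ c < a < b.
Definition has1423 (s : seq nat) :=
  exists a b c d, subseq [:: a; b; c; d] s /\ [&& a < c, c < d & d < b].

Lemma avoids231 s : avoids s [:: 2; 3; 1] <-> ~ has231 s.
Proof.
split.
  by move=> A [a [b [c [H1 H2]]]]; move: (avoids_sub A H1); rewrite so231 H2.
move=> N; apply: sub_avoids => t Ht; apply/negP => So.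
have [a [b [c E]]] := same_order3 (erefl : size [:: 2; 3; 1] = 3) So; subst t.
by apply: N; exists a, b, c; rewrite -so231.
Qed.

Lemma avoids1423 s : avoids s pat1423 <-> ~ has1423 s.
Proof.
split.
  by move=> A [a [b [c [d [H1 H2]]]]]; move: (avoids_sub A H1); rewrite /pat1423 so1423 H2.
move=> N; apply: sub_avoids => t Ht; apply/negP => So.
have [a [b [c [d E]]]] := same_order4 (erefl : size pat1423 = 4) So; subst t.
by apply: N; exists a, b, c, d; rewrite -so1423.
Qed.

Lemma sub_cons_ne (e n : nat) r w : subseq (e :: r) (n :: w) -> e != n -> subseq (e :: r) w.
Proof. by rewrite /=; case: eqP. Qed.
Lemma sub_cons_tl (e n : nat) r w : subseq (e :: r) (n :: w) -> subseq r w.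
Proof. by rewrite /=; case: eqP => // _ /cons_subseq. Qed.

Lemma sub_lt n w t x : all (fun x => x < n) w -> subseq t w -> x \in t -> x < n.
Proof. by move=> /allP A S xt; apply: A; exact: (mem_subseq S). Qed.

Lemma rot_class n w : all (fun x => x < n) w ->
  (forall i, i < (size w).+1 -> ~ has1423 (rot i (n :: w))) <-> (~ has231 w /\ ~ has1423 w).
Proof.
move=> Aw; split.
  move=> H; split.
    move=> [a [b [c [S /andP[ca ab]]]]].
    have S' : subseq ([:: n; a; b] ++ [:: c]) (n :: w) by rewrite /= eqxx.
    have [i [H1 H2]] := subseq_tdE S'.
    have bn : b < n by apply: (sub_lt Aw S); rewrite !inE eqxx ?orbT.
    have ilt : i < (size w).+1.
      rewrite ltnNge; apply/negP => le; move: H2; rewrite drop_oversize //.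
    apply: (H i ilt); exists c, n, a, b; split; last by rewrite ca ab bn.
    by rewrite /rot (cat_subseq H2 H1).
  move=> [a [b [c [d [S P]]]]]; apply: (H 0 erefl); exists a, b, c, d; split => //.
  by rewrite rot0; apply: subseq_trans S (subseq_cons _ _).
move=> [N231 N1423] i _ [a [b [c [d [S /and3P[ac cd db]]]]]].
move: S; rewrite /rot => /subseq_catE [t1 [t2 [E S1 S2]]].
have Sq : subseq (t2 ++ t1) (n :: w).
  by rewrite -[n :: w](cat_take_drop i); exact: cat_subseq.
have X3 : forall x y z, subseq [:: x; y; z] w -> z < x < y -> False.
  by move=> x y z Sx H; apply: N231; exists x, y, z.
clear S1 S2; move: E Sq; case: t1 => [|x1 [|x2 [|x3 [|x4 [|x5 t1]]]]] // E; rewrite /= in E; rewrite ?cats0.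
- subst t2 => Sq.
  have Sr := sub_cons_tl Sq.
  have cn : c < n by apply: (sub_lt Aw Sr); rewrite !inE eqxx ?orbT.
  have Sw := sub_cons_ne Sq (negbT (ltn_eqF (ltn_trans ac cn))).
  by apply: N1423; exists a, b, c, d; rewrite ac cd db.
- case: E => <- <- Sq.
  have Sr := sub_cons_tl Sq.
  by apply: (X3 c d a); [apply: subseq_trans Sr; rewrite /= !eqxx | rewrite ac cd].
- case: E => <- <- <- Sq.
  have Sr := sub_cons_tl Sq.
  have bn : b < n by apply: (sub_lt Aw Sr); rewrite !inE eqxx ?orbT.
  have Sw := sub_cons_ne Sq (negbT (ltn_eqF (ltn_trans cd (ltn_trans db bn)))).
  apply: (X3 c d a); last by rewrite ac cd.
  apply: subseq_trans Sw; exact: (prefix_subseq [:: c; d; a] [:: b]).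
- case: E => <- <- <- <- Sq.
  have Sr := sub_cons_tl Sq.
  have bn : b < n by apply: (sub_lt Aw Sr); rewrite !inE eqxx ?orbT.
  have Sw := sub_cons_ne Sq (negbT (ltn_eqF (ltn_trans db bn))).
  apply: (X3 d b c); last by rewrite cd db.
  apply: subseq_trans Sw.
  by rewrite -[[:: d; b; c]]/([:: d] ++ [:: b; c]) -[[:: d; a; b; c]]/([:: d] ++ [:: a; b; c]) subseq_cat2l subseq_cons.
- case: E => <- <- <- <- <- Sq.
  have Sr := sub_cons_tl Sq.
  have cn : c < n by apply: (sub_lt Aw Sr); rewrite !inE eqxx ?orbT.
  have Sw := sub_cons_ne Sq (negbT (ltn_eqF (ltn_trans ac cn))).
  by apply: N1423; exists a, b, c, d; rewrite ac cd db.
Qed.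

Definition Dd b c := rev (iota b c).

Fixpoint Gf (f a k : nat) : seq (seq nat) :=
  match f with
  | 0 => [:: [::]]
  | f'.+1 => match k with
    | 0 => [:: [::]]
    | k'.+1 => [seq (a + k') :: r | r <- Gf f' a k'] ++
               [seq l ++ (a + k') :: Dd (a + j) (k' - j) | j <- iota 1 k', l <- Gf f' a j]
    end
  end.

Definition G a k := Gf k a k.

Lemma Gf_fuel a f g k : k <= f -> k <= g -> Gf f a k = Gf g a k.
Proof.
elim: f g k => [|f IH] [|g] [|k] //= kf kg.
congr (_ ++ _); first by rewrite (IH g).
congr flatten; apply/eq_in_map => j; rewrite mem_iota => /andP[j1 j2].
by rewrite (IH g) //; lia.
Qed.

Lemma G0 a : G a 0 = [:: [::]].
Proof. by []. Qed.

Lemma G_S a k : G a k.+1 = [seq (a + k) :: r | r <- G a k] ++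
   [seq l ++ (a + k) :: Dd (a + j) (k - j) | j <- iota 1 k, l <- G a j].
Proof.
rewrite /G /=; congr (_ ++ _).
congr flatten; apply/eq_in_map => j; rewrite mem_iota => /andP[j1 j2].
by rewrite (Gf_fuel _ (f := k) (g := j)) //; lia.
Qed.

Lemma G_SP a k w : w \in G a k.+1 <->
  (exists2 r, r \in G a k & w = (a + k) :: r) \/
  (exists j l, [/\ 0 < j <= k, l \in G a j & w = l ++ (a + k) :: Dd (a + j) (k - j)]).
Proof.
rewrite G_S mem_cat; split.
  case/orP => [/mapP[r rG ->]|/allpairsPdep[j [l [jI lG ->]]]]; first by left; exists r.
  by right; exists j, l; split => //; move: jI; rewrite mem_iota; lia.
case => [[r rG ->]|[j [l [jk lG ->]]]]; apply/orP; first by left; apply/mapP; exists r.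
by right; apply/allpairsPdep; exists j, l; split => //; rewrite mem_iota; lia.
Qed.

Lemma G_ind a (P : nat -> seq nat -> Prop) :
  P 0 [::] ->
  (forall k r, r \in G a k -> P k r -> P k.+1 ((a + k) :: r)) ->
  (forall k j l, 0 < j <= k -> l \in G a j -> P j l ->
      P k.+1 (l ++ (a + k) :: Dd (a + j) (k - j))) ->
  forall k w, w \in G a k -> P k w.
Proof.
move=> P0 P1 P2; elim/ltn_ind => [[|k]] IH w.
  by rewrite G0 inE => /eqP ->.
case/G_SP => [[r rG ->]|[j [l [jk lG ->]]]]; first by apply: P1 => //; apply: IH.
by apply: P2 => //; apply: IH => //; lia.
Qed.

Lemma iotaS_r a k : iota a k.+1 = iota a k ++ [:: a + k].
Proof. by rewrite -addn1 iotaD. Qed.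

Lemma DdS a j k : j <= k -> (a + k) :: Dd (a + j) (k - j) = Dd (a + j) (k - j).+1.
Proof.
move=> jk; rewrite /Dd iotaS_r rev_cat /=; congr (_ :: _); lia.
Qed.

Lemma sorted_Dd b c : sorted gtn (Dd b c).
Proof.
rewrite /Dd rev_sorted.
have E : (fun z => gtn^~ z) =2 ltn by [].
by rewrite (eq_sorted E) iota_ltn_sorted.
Qed.

Lemma G_perm a k w : w \in G a k -> perm_eq w (iota a k).
Proof.
move: k w; apply: G_ind => // [k r _ H|k j l jk _ H].
  by rewrite iotaS_r perm_sym perm_catC /= perm_cons perm_sym.
have -> : k.+1 = j + ((k - j) + 1) by lia.
rewrite iotaD iotaD -cat1s; apply: perm_cat => //.
rewrite perm_sym perm_catC /= -addnA subnKC; last lia.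
by rewrite perm_cons perm_sym perm_rev.
Qed.

Lemma G_mem a k w x : w \in G a k -> x \in w -> a <= x < a + k.
Proof. by move=> /G_perm /perm_mem E; rewrite E mem_iota. Qed.

Lemma G_uniq_w a k w : w \in G a k -> uniq w.
Proof. by move=> /G_perm /perm_uniq ->; exact: iota_uniq. Qed.

Lemma G_size_w a k w : w \in G a k -> size w = k.
Proof. by move=> /G_perm /perm_size ->; rewrite size_iota. Qed.

Lemma gtn_trans : transitive gtn.
Proof. by move=> x y z /= H1 H2; apply: ltn_trans H1. Qed.

Lemma class_cat (L M : seq nat) : ~ has231 L -> ~ has1423 L -> sorted gtn M ->
  (forall x y, x \in L -> y \in M -> x < y) -> ~ has231 (L ++ M) /\ ~ has1423 (L ++ M).
Proof.
move=> N1 N2 SM LM; split.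
  move=> [x [y [z [/subseq_catE[t1 [t2 [E S1 S2]]] /andP[zx xy]]]]].
  have St2 : sorted gtn t2 by exact: (@subseq_sorted _ gtn gtn_trans _ _ S2 SM).
  have lt : forall u v, u \in t1 -> v \in t2 -> u < v.
    by move=> u v ut vt; apply: LM; [exact: (mem_subseq S1) | exact: (mem_subseq S2)].
  move: E St2 lt S1; case: t1 => [|x1 [|x2 [|x3 [|x4 t1]]]] // E; rewrite /= in E.
  - by rewrite -E /= => /and3P[H _ _]; lia.
  - case: E => <- <-; move=> _ lt _; have := lt x z; rewrite !inE !eqxx orbT => /(_ erefl erefl); lia.
  - case: E => <- <- <-; move=> _ lt _; have := lt x z; rewrite !inE !eqxx ?orbT => /(_ erefl erefl); lia.
  - case: E => <- <- <- <-; move=> _ _ S1; apply: N1; exists x, y, z; by rewrite zx xy.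
move=> [x [y [z [u [/subseq_catE[t1 [t2 [E S1 S2]]] /and3P[xz zu uy]]]]]].
have St2 : sorted gtn t2 by exact: (@subseq_sorted _ gtn gtn_trans _ _ S2 SM).
have lt : forall u v, u \in t1 -> v \in t2 -> u < v.
  by move=> u' v ut vt; apply: LM; [exact: (mem_subseq S1) | exact: (mem_subseq S2)].
move: E St2 lt S1; case: t1 => [|x1 [|x2 [|x3 [|x4 [|x5 t1]]]]] // E; rewrite /= in E.
- by rewrite -E /= => /and4P[H _ _ _]; lia.
- case: E => <- <-; rewrite /= => /andP[_ /andP[H _]]; lia.
- case: E => <- <- <-; rewrite /= => /andP[H _]; lia.
- case: E => <- <- <- <-; move=> _ lt _; have := lt y u; rewrite !inE !eqxx ?orbT => /(_ erefl erefl); lia.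
- case: E => <- <- <- <- <-; move=> _ _ S1; apply: N2; exists x, y, z, u; by rewrite xz zu uy.

Qed.

Lemma class_cons (m : nat) r : ~ has231 r -> ~ has1423 r -> (forall x, x \in r -> x < m) ->
  ~ has231 (m :: r) /\ ~ has1423 (m :: r).
Proof.
move=> N1 N2 lt; split.
  move=> [x [y [z [S /andP[zx xy]]]]].
  move: S; rewrite [subseq _ _]/=; case: eqP => [E|_] S.
    by rewrite E in xy; have := lt y; rewrite (mem_subseq S) ?inE ?eqxx // => /(_ erefl); lia.
  by apply: N1; exists x, y, z; rewrite zx xy.
move=> [x [y [z [u [S /and3P[xz zu uy]]]]]].
move: S; rewrite [subseq _ _]/=; case: eqP => [E|_] S.
  by rewrite E in xz; have := lt z; rewrite (mem_subseq S) ?inE ?eqxx ?orbT // => /(_ erefl); lia.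
by apply: N2; exists x, y, z, u; rewrite xz zu uy.
Qed.

Lemma G_class a k w : w \in G a k -> ~ has231 w /\ ~ has1423 w.
Proof.
move=> wG; move: k w wG; apply: G_ind.
- split; move=> [x [y [z]]]; first by case=> [] [].
  by move=> [u []].
- move=> k r rG [N1 N2]; apply: class_cons => // x xr.
  by have := G_mem rG xr; lia.
- move=> k j l jk lG [N1 N2]; rewrite DdS; last lia.
  apply: class_cat => //; first exact: sorted_Dd.
  move=> x y xl; rewrite /Dd mem_rev mem_iota => /andP[H _].
  by have := G_mem lG xl; lia.
Qed.

Lemma dec_of_no12 (R : seq nat) : uniq R -> (forall x y, subseq [:: x; y] R -> ~ x < y) -> sorted gtn R.
Proof.
elim: R => // x R IH /= /andP[xR uR] H.
case: R IH xR uR H => // y R IH xR uR H /=.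
apply/andP; split.
  have : ~ x < y by apply: H; rewrite /= eqxx eqxx sub0seq.
  have : x != y by move: xR; rewrite inE negb_or => /andP[].
  move=> /eqP ne nl; lia.
apply: IH => // u v S; apply: H; case: ifP => _ //; exact: subseq_trans (subseq_cons _ _) S.
Qed.

Lemma gtn_anti : antisymmetric gtn.
Proof. by move=> x y /andP[H1 H2]; lia. Qed.

Lemma G_complete a k w : perm_eq w (iota a k) -> ~ has231 w -> ~ has1423 w -> w \in G a k.
Proof.
elim/ltn_ind: k w => [[|k]] IH w P N1 N2.
  by move/perm_size: P; rewrite size_iota; case: w N1 N2.
set m := a + k.
have mw : m \in w by rewrite (perm_mem P) mem_iota; lia.
have Uw : uniq w by rewrite (perm_uniq P) iota_uniq.
have Mw : forall x, x \in w -> a <= x <= m.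
  by move=> x; rewrite (perm_mem P) mem_iota /m; lia.
case/splitPr: mw Uw Mw P N1 N2 => L R Uw Mw P N1 N2.
have UL : uniq L by move: Uw; rewrite cat_uniq => /and3P[].
have UR : uniq R by move: Uw; rewrite cat_uniq => /and3P[_ _ /andP[]].
have mL : m \notin L.
  by move: Uw; rewrite cat_uniq => /and3P[_ /hasPn H _]; apply: (H m); rewrite inE eqxx.
have mR : m \notin R by move: Uw; rewrite cat_uniq => /and3P[_ _ /andP[]].
have dLR : forall x, x \in L -> x \notin R.
  move=> x xL; apply/negP => xR.
  by move: Uw; rewrite cat_uniq => /and3P[_ /hasPn H _]; move: (H x); rewrite inE xR orbT => /(_ erefl); rewrite xL.
have ML : forall x, x \in L -> a <= x < m.
  move=> x xL; have := Mw x; rewrite mem_cat xL => /(_ erefl).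
  have : x != m by apply: contraNneq mL => <-.
  move=> /eqP; lia.
have MR : forall x, x \in R -> a <= x < m.
  move=> x xR; have := Mw x; rewrite mem_cat inE xR !orbT => /(_ erefl).
  have : x != m by apply: contraNneq mR => <-.
  move=> /eqP; lia.
have LR : forall x y, x \in L -> y \in R -> x < y.
  move=> x y xL yR; rewrite ltnNge leq_eqVlt negb_or; apply/andP; split.
    by apply: contraNneq (dLR x xL) => <-.
  apply/negP => yx; apply: N1; exists x, m, y; split; last by have := ML x xL; rewrite yx /=; lia.
  rewrite -cat1s; apply: cat_subseq; first by rewrite sub1seq.
  by rewrite /= eqxx sub1seq.
have PLR : perm_eq (L ++ R) (iota a k).
  rewrite -(perm_cons m).
  have H1 : perm_eq (m :: (L ++ R)) (L ++ m :: R) by rewrite -cat1s perm_catCA.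
  have H2 : perm_eq (iota a k.+1) (m :: iota a k) by rewrite iotaS_r perm_catC.
  exact: perm_trans H1 (perm_trans P H2).
have LRm : forall x, x \in L ++ R = (a <= x < a + k) by move=> x; rewrite (perm_mem PLR) mem_iota.
set j := size L.
have jk : j + size R = k by move/perm_size: PLR; rewrite size_cat size_iota.
have Lmem : forall x, x \in L -> x < a + j.
  move=> x xL; rewrite ltnNge; apply/negP => le.
  have : (x - a).+1 <= j.
    have -> : (x - a).+1 = size (iota a (x - a).+1) by rewrite size_iota.
    apply: uniq_leq_size; first exact: iota_uniq.
    move=> v; rewrite mem_iota => /andP[av vx].
    have : v \in L ++ R by rewrite LRm; have := ML x xL; lia.
    rewrite mem_cat => /orP[//|vR]; have := LR x v xL vR; lia.
  have := ML x xL; lia.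
have Rmem : forall y, y \in R -> a + j <= y.
  move=> y yR; rewrite leqNgt; apply/negP => lt.
  have : j <= y - a.
    rewrite /j -[y - a](size_iota a); apply: uniq_leq_size => // v vL.
    rewrite mem_iota; have := ML v vL; have := LR v y vL yR; lia.
  have := MR y yR; lia.
have PL : perm_eq L (iota a j).
  apply: uniq_perm => //; first exact: iota_uniq.
  move=> x; rewrite mem_iota; apply/idP/idP => [xL|H].
    by have := ML x xL; have := Lmem x xL; lia.
  have : x \in L ++ R by rewrite LRm; lia.
  rewrite mem_cat => /orP[//|xR]; have := Rmem x xR; lia.
have PR : perm_eq R (iota (a + j) (k - j)).
  have E : iota a k = iota a j ++ iota (a + j) (k - j) by rewrite -iotaD; congr iota; lia.
  rewrite -(perm_cat2l (iota a j)) -E; apply: perm_trans PLR.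
  by rewrite perm_cat2r perm_sym.
have SL : subseq L (L ++ m :: R) by exact: prefix_subseq.
have SR : subseq R (L ++ m :: R).
  by apply: subseq_trans (subseq_cons R m) _; exact: suffix_subseq.
have NL1 : ~ has231 L by move=> [x [y [z [S H]]]]; apply: N1; exists x, y, z; split => //; exact: subseq_trans S SL.
have NL2 : ~ has1423 L by move=> [x [y [z [u [S H]]]]]; apply: N2; exists x, y, z, u; split => //; exact: subseq_trans S SL.
have NR1 : ~ has231 R by move=> [x [y [z [S H]]]]; apply: N1; exists x, y, z; split => //; exact: subseq_trans S SR.
have NR2 : ~ has1423 R by move=> [x [y [z [u [S H]]]]]; apply: N2; exists x, y, z, u; split => //; exact: subseq_trans S SR.
apply/G_SP; destruct L as [|l L'].
  left; exists R => //; apply: IH => //; move: PR; rewrite /j /= addn0 subn0 //.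
right; exists j, (l :: L'); split => //.
- move: jk; rewrite /j /=; lia.
- by apply: IH => //; move: jk; rewrite /j /=; lia.
have SRd : sorted gtn R.
  apply: dec_of_no12 => // x y S xy; apply: N2; exists l, m, x, y; split.
    rewrite -cat1s -[l :: L']cat1s -catA; apply: cat_subseq; first by rewrite sub1seq inE eqxx.
    apply: subseq_trans (suffix_subseq L' _); rewrite /= eqxx //.
  have xR : x \in R := mem_subseq S (mem_head x [:: y]).
  have yR : y \in R by apply: (mem_subseq S); rewrite !inE eqxx orbT.
  by rewrite xy /= (LR l x (mem_head _ _) xR); case/andP: (MR y yR).
suff -> : R = Dd (a + j) (k - j) by [].
apply: (sorted_eq gtn_trans gtn_anti) => //; first exact: sorted_Dd.
by rewrite /Dd perm_sym perm_rev perm_sym.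
Qed.

Lemma G_uniq a k : uniq (G a k).
Proof.
elim/ltn_ind: k => [[|k]] IH //.
rewrite G_S cat_uniq; apply/and3P; split.
- by rewrite map_inj_uniq ?IH // => x y [].
- apply/hasPn => w /allpairsPdep[j [l [jI lG ->]]]; apply/mapP => [[r _]].
  move: jI; rewrite mem_iota => /andP[j1 j2].
  case: l lG => [|x l] lG.
    by move: (G_size_w lG) => /= js; lia.
  move=> [E _]; have := G_mem lG (mem_head x l); lia.
apply: allpairs_uniq_dep; first exact: iota_uniq.
  by move=> j; rewrite mem_iota => /andP[_ jk]; apply: IH; lia.
move=> [j1 l1] [j2 l2] /allpairsPdep[j1' [l1' [H1 H2 E1]]] /allpairsPdep[j2' [l2' [H3 H4 E2]]] /= E.
case: E1 => E1a E1b; subst j1' l1'.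
case: E2 => E2a E2b; subst j2' l2'.
have s1 := G_size_w H2; have s2 := G_size_w H4.
have m1 : a + k \notin l1 by apply/negP => /(G_mem H2); move: H1; rewrite mem_iota; lia.
have m2 : a + k \notin l2 by apply/negP => /(G_mem H4); move: H3; rewrite mem_iota; lia.
have ej : j1 = j2.
  have := congr1 (index (a + k)) E; rewrite !index_cat (negbTE m1) (negbTE m2) /= eqxx.
  by rewrite !addn0 -s1 -s2.
have L12 : l1 = l2.
  have := congr1 (take j1) E.
  by rewrite (take_size_cat _ s1) (take_size_cat _ (etrans s2 (esym ej))).
by subst.
Qed.

Lemma size_G_S a k : size (G a k.+1) = size (G a k) + sumn [seq size (G a j) | j <- iota 1 k].
Proof. by rewrite G_S size_cat size_map size_allpairs_dep. Qed.

Lemma fibS m : fib m.+2 = fib m.+1 + fib m.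
Proof. by []. Qed.

Lemma size_G a n : 0 < n -> size (G a n) = fib (2 * n - 1).
Proof.
suff H : forall k, (forall j, 0 < j <= k -> size (G a j) = fib (2 * j - 1)) /\
                  sumn [seq size (G a j) | j <- iota 1 k] = fib (2 * k).
  by move=> n0; apply: (H n).1; lia.
elim=> [|k [IH1 IH2]]; first by split => //; lia.
have Sk : size (G a k.+1) = fib (2 * k.+1 - 1).
  rewrite size_G_S IH2.
  case: k IH1 IH2 => [|k] IH1 IH2; first by [].
  rewrite IH1; last lia.
  have E1 : 2 * k.+1 = (2 * k).+2 by lia.
  have E2 : 2 * k.+2 - 1 = (2 * k).+3 by lia.
  have E3 : 2 * k.+1 - 1 = (2 * k).+1 by lia.
  by rewrite E2 E3 E1 fibS addnC.
split.
  move=> j /andP[j0]; rewrite leq_eqVlt => /orP[/eqP ->//|jk]; apply: IH1; lia.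
have E1 : 2 * k.+1 = (2 * k).+2 by lia.
have E3 : 2 * k.+1 - 1 = (2 * k).+1 by lia.
rewrite iotaS_r map_cat sumn_cat IH2 [sumn _]/= add1n Sk addn0 E3 E1 fibS.
exact: addnC.
Qed.

Definition parcs (x : nat) (w : seq nat) (y : nat) : seq (nat * nat) := zip (x :: w) (rcons w y).
Definition cr (u v : nat * nat) := (u.1 < v.1) && (v.2 < u.2).
Definition dec3b (A : seq (nat * nat)) :=
  has (fun u => has (fun v => cr u v && has (fun z => cr v z) A) A) A.
Definition dec4b (A : seq (nat * nat)) :=
  has (fun u => has (fun v => cr u v && has (fun z => cr v z && has (fun t => cr z t) A) A) A) A.

Definition chain3 (A : seq (nat * nat)) := exists u v z, [/\ u \in A, v \in A, z \in A, cr u v & cr v z].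
Definition chain4 (A : seq (nat * nat)) := exists u v z t, [/\ u \in A, v \in A, z \in A, t \in A & [/\ cr u v, cr v z & cr z t]].

Lemma dec3P A : reflect (chain3 A) (dec3b A).
Proof.
apply: (iffP idP).
  by case/hasP => u uA /hasP[v vA /andP[uv /hasP[z zA vz]]]; exists u, v, z.
case=> u [v [z [uA vA zA uv vz]]]; apply/hasP; exists u => //; apply/hasP; exists v => //.
by rewrite uv; apply/hasP; exists z.
Qed.

Lemma dec4P A : reflect (chain4 A) (dec4b A).
Proof.
apply: (iffP idP).
  case/hasP => u uA /hasP[v vA /andP[uv /hasP[z zA /andP[vz /hasP[t tA zt]]]]].
  by exists u, v, z, t.
case=> u [v [z [t [uA vA zA tA [uv vz zt]]]]]; apply/hasP; exists u => //; apply/hasP; exists v => //.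
by rewrite uv; apply/hasP; exists z => //; rewrite vz; apply/hasP; exists t.
Qed.

Lemma cr_irr u : cr u u = false.
Proof. by rewrite /cr ltnn. Qed.

Lemma cr_trans u v z : cr u v -> cr v z -> cr u z.
Proof. rewrite /cr => /andP[H1 H2] /andP[H3 H4]; apply/andP; split; lia. Qed.

Lemma parcs_cons x m r y : parcs x (m :: r) y = (x, m) :: parcs m r y.
Proof. by []. Qed.

Lemma parcs_cat x L m R y : parcs x (L ++ m :: R) y = parcs x L m ++ parcs m R y.
Proof.
rewrite /parcs.
have -> : rcons (L ++ m :: R) y = rcons L m ++ rcons R y by elim: L => //= ? ? ->.
by rewrite -cat_cons zip_cat // size_rcons.
Qed.

Lemma parcs_nil x y : parcs x [::] y = [:: (x, y)].
Proof. by []. Qed.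

Lemma mem_zip1 (s t : seq nat) a : a \in zip s t -> a.1 \in s /\ a.2 \in t.
Proof.
elim: s t => [|p s IH] [|q t] //=; rewrite inE => /orP[/eqP ->|/IH[H1 H2]] /=.
  by rewrite !inE !eqxx.
by rewrite !inE H1 H2 !orbT.
Qed.

Lemma mem_parcs x w y a : a \in parcs x w y -> a.1 \in x :: w /\ a.2 \in rcons w y.
Proof. exact: mem_zip1. Qed.

Lemma chain3_sub A B : {subset A <= B} -> chain3 A -> chain3 B.
Proof. by move=> S [u [v [z [uA vA zA uv vz]]]]; exists u, v, z; split => //; apply: S. Qed.
Lemma chain4_sub A B : {subset A <= B} -> chain4 A -> chain4 B.
Proof.
by move=> S [u [v [z [t [uA vA zA tA H]]]]]; exists u, v, z, t; split => //; apply: S.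
Qed.

Lemma chain_top3 e A : (forall v, v \in e :: A -> ~~ cr e v) ->
  (forall u v, u \in e :: A -> v \in e :: A -> cr v e -> ~~ cr u v) ->
  chain3 (e :: A) -> chain3 A.
Proof.
move=> H1 H2 [u [v [z [uA vA zA uv vz]]]].
have ne : forall p q, p \in e :: A -> q \in e :: A -> cr p q -> p != e.
  by move=> p q pA qA pq; apply: contraTneq pq => ->; apply: H1.
have nv := ne _ _ vA zA vz; have nu := ne _ _ uA vA uv.
have nz : z != e.
  by apply: contraTneq vz => ->; apply/negP => ve; move: (H2 _ _ uA vA ve); rewrite uv.
exists u, v, z; split => //.
- by move: uA; rewrite inE (negbTE nu).
- by move: vA; rewrite inE (negbTE nv).
- by move: zA; rewrite inE (negbTE nz).
Qed.

Lemma chain_top4 e A : (forall v, v \in e :: A -> ~~ cr e v) ->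
  (forall u v, u \in e :: A -> v \in e :: A -> cr v e -> ~~ cr u v) ->
  chain4 (e :: A) -> chain4 A.
Proof.
move=> H1 H2 [u [v [z [t [uA vA zA tA [uv vz zt]]]]]].
have ne : forall p q, p \in e :: A -> q \in e :: A -> cr p q -> p != e.
  by move=> p q pA qA pq; apply: contraTneq pq => ->; apply: H1.
have nv := ne _ _ vA zA vz; have nu := ne _ _ uA vA uv; have nz := ne _ _ zA tA zt.
have nt : t != e.
  by apply: contraTneq zt => ->; apply/negP => ze; move: (H2 _ _ vA zA ze); rewrite vz.
exists u, v, z, t; split => //.
- by move: uA; rewrite inE (negbTE nu).
- by move: vA; rewrite inE (negbTE nv).
- by move: zA; rewrite inE (negbTE nz).
- by move: tA; rewrite inE (negbTE nt).
Qed.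

Definition crel (p c : nat * nat) := [|| p == c, cr p c | cr c p].

Definition clf (u0 v0 f p : nat * nat) :=
  if p == u0 then 0 else if (p == v0) || (p == f) then 1 else 2.

Lemma clK A1 A2 u0 v0 f p q c :
  (forall a, a \in A1 -> [\/ a = u0, a = v0 | forall b, b \in A2 -> ~~ cr a b && ~~ cr b a]) ->
  (forall b b', b \in A2 -> b' \in A2 -> b != f -> b' != f -> ~~ cr b b') ->
  ~~ cr v0 f -> ~~ cr f v0 ->
  cr p q -> p \in A1 ++ A2 -> q \in A1 ++ A2 -> c \in A2 -> crel p c -> crel q c ->
  clf u0 v0 f p != clf u0 v0 f q.
Proof.
move=> H1 H2 H3 H4 pq pA qA cA pc qc.
have inner : forall r, r \in A1 ++ A2 -> crel r c -> r != u0 -> r != v0 -> r \in A2.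
  move=> r; rewrite mem_cat => /orP[rA|//] rc ru rv.
  case: (H1 r rA) => [Eu|Ev|Hb]; first by rewrite Eu eqxx in ru.
    by rewrite Ev eqxx in rv.
  move: rc; rewrite /crel; case: eqP => [-> //|_] /=.
  by have /andP[/negbTE -> /negbTE ->] := Hb c cA.
rewrite /clf.
case: (p =P u0) => [Ep|Np]; case: (q =P u0) => [Eq|Nq]; try by case: ifP.
  by move: pq; rewrite Ep Eq cr_irr.
case: (boolP ((p == v0) || (p == f))) => Hp; case: (boolP ((q == v0) || (q == f))) => Hq //.
  move: Hp Hq pq => /orP[/eqP->|/eqP->] /orP[/eqP->|/eqP->]; rewrite ?cr_irr //.
    by rewrite (negbTE H3).
  by rewrite (negbTE H4).
move: Hp Hq; rewrite !negb_or => /andP[pv pf] /andP[qv qf].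
have pA2 : p \in A2 by apply: inner => //; apply/eqP.
have qA2 : q \in A2 by apply: inner => //; apply/eqP.
by move: (H2 p q pA2 qA2 pf qf); rewrite pq.
Qed.

Lemma pig4 a b c d : a <= 2 -> b <= 2 -> c <= 2 -> d <= 2 -> a != b -> a != c -> a != d ->
  b != c -> b != d -> c != d -> False.
Proof. by case: a => [|[|[|?]]]; case: b => [|[|[|?]]]; case: c => [|[|[|?]]]; case: d => [|[|[|?]]]. Qed.

Lemma pig3 a b c : a <= 1 -> b <= 1 -> c <= 1 -> a != b -> a != c -> b != c -> False.
Proof. by case: a => [|[|?]]; case: b => [|[|?]]; case: c => [|[|?]]. Qed.

Lemma chain_cat4 A1 A2 u0 v0 f :
  (forall a, a \in A1 -> [\/ a = u0, a = v0 | forall b, b \in A2 -> ~~ cr a b && ~~ cr b a]) ->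
  (forall b b', b \in A2 -> b' \in A2 -> b != f -> b' != f -> ~~ cr b b') ->
  ~~ cr v0 f -> ~~ cr f v0 ->
  chain4 (A1 ++ A2) -> chain4 A1.
Proof.
move=> H1 H2 H3 H4 [u [v [z [t [uA vA zA tA [uv vz zt]]]]]].
have uz := cr_trans uv vz; have vt := cr_trans vz zt; have ut := cr_trans uz zt.
have K := clK H1 H2 H3 H4.
have cl2 : forall p, clf u0 v0 f p <= 2.
  by move=> p; rewrite /clf; case: eqP => //; case: orP.
have F : forall c, c \in A2 -> crel u c -> crel v c -> crel z c -> crel t c -> False.
  move=> c cA Hu Hv Hz Ht.
  exact: (pig4 (cl2 u) (cl2 v) (cl2 z) (cl2 t) (K _ _ _ uv uA vA cA Hu Hv)
    (K _ _ _ uz uA zA cA Hu Hz) (K _ _ _ ut uA tA cA Hu Ht) (K _ _ _ vz vA zA cA Hv Hz)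
    (K _ _ _ vt vA tA cA Hv Ht) (K _ _ _ zt zA tA cA Hz Ht)).
have ins : forall p, p \in A1 ++ A2 -> p \in A2 \/ p \in A1.
  by move=> p; rewrite mem_cat => /orP[]; [right|left].
rewrite /crel in F.
case: (ins u uA) => [uA2|uA1].
  by exfalso; apply: (F u uA2); rewrite ?eqxx ?uv ?uz ?ut ?orbT.
case: (ins v vA) => [vA2|vA1].
  by exfalso; apply: (F v vA2); rewrite ?eqxx ?uv ?vz ?vt ?orbT.
case: (ins z zA) => [zA2|zA1].
  by exfalso; apply: (F z zA2); rewrite ?eqxx ?uz ?vz ?zt ?orbT.
case: (ins t tA) => [tA2|tA1].
  by exfalso; apply: (F t tA2); rewrite ?eqxx ?ut ?vt ?zt ?orbT.
by exists u, v, z, t.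
Qed.

Lemma chain_cat3 A1 A2 u0 v0 f :
  (forall a, a \in A1 -> [\/ a = u0, a = v0 | forall b, b \in A2 -> ~~ cr a b && ~~ cr b a]) ->
  (forall b, b \in A2 -> b = f) ->
  ~~ cr v0 f -> ~~ cr f v0 ->
  chain3 (A1 ++ A2) -> chain3 A1.
Proof.
move=> H1 H2' H3 H4 [u [v [z [uA vA zA [uv vz]]]]].
have H2 : forall b b', b \in A2 -> b' \in A2 -> b != f -> b' != f -> ~~ cr b b'.
  by move=> b b' /H2' ->; rewrite eqxx.
have uz := cr_trans uv vz.
have K := clK H1 H2 H3 H4.
have cl2 : forall p c, p \in A1 ++ A2 -> c \in A2 -> crel p c -> clf u0 v0 f p <= 1.
  move=> p c; rewrite mem_cat /clf => /orP[pA|pA] cA pc; last by rewrite (H2' p pA) eqxx orbT; case: ifP.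
  case: (H1 p pA) => [->|->|Hb]; first by rewrite eqxx.
    by rewrite eqxx; case: ifP.
  move: pc; rewrite /crel; case: eqP => [->|_] /=.
    by rewrite (H2' c cA) eqxx orbT; case: ifP.
  by have /andP[/negbTE -> /negbTE ->] := Hb c cA.
have F : forall c, c \in A2 -> crel u c -> crel v c -> crel z c -> False.
  move=> c cA Hu Hv Hz.
  exact: (pig3 (cl2 u c uA cA Hu) (cl2 v c vA cA Hv) (cl2 z c zA cA Hz)
    (K _ _ _ uv uA vA cA Hu Hv) (K _ _ _ uz uA zA cA Hu Hz) (K _ _ _ vz vA zA cA Hv Hz)).
have ins : forall p, p \in A1 ++ A2 -> p \in A2 \/ p \in A1.
  by move=> p; rewrite mem_cat => /orP[]; [right|left].
rewrite /crel in F.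
case: (ins u uA) => [uA2|uA1].
  by exfalso; apply: (F u uA2); rewrite ?eqxx ?uv ?uz ?orbT.
case: (ins v vA) => [vA2|vA1].
  by exfalso; apply: (F v vA2); rewrite ?eqxx ?uv ?vz ?orbT.
case: (ins z zA) => [zA2|zA1].
  by exfalso; apply: (F z zA2); rewrite ?eqxx ?uz ?vz ?orbT.
by exists u, v, z.
Qed.

Ltac nlia := repeat (match goal with |- _ -> _ => intro end); cbn in *; lia.

Lemma parcs_shape x L z a : a \in parcs x L z ->
  [\/ a = (x, head z L), a = (last x L, z) | a.1 \in L /\ a.2 \in L].
Proof.
elim: L x => [|l L IH] x; first by rewrite parcs_nil inE => /eqP ->; constructor 1.
rewrite parcs_cons inE => /orP[/eqP ->|]; first by constructor 1.
case/IH => [->|->|[H1 H2]] /=.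
- case: L {IH} => [|l' L] /=; first by constructor 2.
  by constructor 3; rewrite !inE !eqxx ?orbT.
- by constructor 2.
- by constructor 3; rewrite !inE H1 H2 !orbT.
Qed.

Lemma parcs_dec m D y : parcs m D y = rcons (zip (m :: D) D) (last m D, y).
Proof.
elim: D m => [|d D IH] m //.
by rewrite parcs_cons IH.
Qed.

Lemma zip_dec_nc (s : seq nat) : sorted gtn s ->
  forall a b : nat * nat, a \in zip s (behead s) -> b \in zip s (behead s) -> ~~ cr a b.
Proof.
elim: s => [|p s IH] //=; case: s IH => [|q s] IH //= /andP[pq Hs] a b.
have Hs' : sorted gtn (q :: s) by [].
have bound : forall c : nat * nat, c \in zip (q :: s) s -> c.1 <= q /\ c.2 < q.
  move=> c /mem_zip1[c1 c2]; split.
    move: c1; rewrite inE => /orP[/eqP->//|c1].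
    have := order_path_min gtn_trans Hs'; move/allP/(_ _ c1) => /=; nlia.
  have := order_path_min gtn_trans Hs'; move/allP/(_ _ c2) => //.
rewrite !inE => /orP[/eqP->|aZ] /orP[/eqP->|bZ]; rewrite ?cr_irr //.
- by have := bound b bZ; rewrite /cr /=; nlia.
- by have := bound a aZ; rewrite /cr /=; nlia.
- exact: IH.
Qed.

Lemma top_H1 x m r y : (forall e, e \in r -> e < m) -> m < x ->
  forall v : nat * nat, v \in (x, m) :: parcs m r y -> ~~ cr (x, m) v.
Proof.
move=> Hr mx v; rewrite inE => /orP[/eqP->|/mem_parcs[v1 _]]; first by rewrite cr_irr.
rewrite /cr /= negb_and; apply/orP; left.
move: v1; rewrite inE => /orP[/eqP->|/Hr]; nlia.
Qed.

Lemma top_H2 x m r y : (forall e, e \in r -> e < m) -> m < y ->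
  forall u v : nat * nat, u \in (x, m) :: parcs m r y -> v \in (x, m) :: parcs m r y -> cr v (x, m) -> ~~ cr u v.
Proof.
move=> Hr my u v.
have B : forall c : nat * nat, c \in (x, m) :: parcs m r y -> c.2 <= y.
  move=> c; rewrite inE => /orP[/eqP->/=|/mem_parcs[_ c2]]; first nlia.
  by move: c2; rewrite mem_rcons inE => /orP[/eqP->//|/Hr]; nlia.
move=> uA vA; rewrite inE in vA; case/orP: vA => [/eqP->|vA]; first by rewrite cr_irr.
have [_ v2] := mem_parcs vA.
move=> vm; have v2y : v.2 = y.
  move: v2 vm; rewrite mem_rcons inE /cr /= => /orP[/eqP->//|/Hr]; nlia.
by rewrite /cr v2y negb_and; apply/orP; right; have := B u uA; nlia.
Qed.

Lemma cat_H1 x l m D y b : l != [::] -> (forall e, e \in l -> e < b) -> (forall e, e \in D -> b <= e) ->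
  b <= m -> b <= y ->
  forall a : nat * nat, a \in parcs x l m ->
   [\/ a = (x, head m l), a = (last x l, m) | forall c : nat * nat, c \in parcs m D y -> ~~ cr a c && ~~ cr c a].
Proof.
move=> l0 Hl HD bm b_y a /parcs_shape[->|->|[a1 a2]]; [by constructor 1|by constructor 2|constructor 3].
move=> c /mem_parcs[c1 c2].
have C1 : b <= c.1 by move: c1; rewrite inE => /orP[/eqP->//|/HD].
have C2 : b <= c.2 by move: c2; rewrite mem_rcons inE => /orP[/eqP->//|/HD].
have := Hl _ a1; have := Hl _ a2; rewrite /cr; nlia.
Qed.

Lemma cat_H2 m D y : sorted gtn (m :: D) ->
  forall b b' : nat * nat, b \in parcs m D y -> b' \in parcs m D y -> b != (last m D, y) -> b' != (last m D, y) -> ~~ cr b b'.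
Proof.
move=> S b b'; rewrite parcs_dec !mem_rcons !inE => /orP[/eqP->|bZ]; first by rewrite eqxx.
move=> /orP[/eqP->|b'Z]; first by rewrite eqxx.
by move=> _ _; apply: (zip_dec_nc S).
Qed.

Lemma last_in (x : nat) l : l != [::] -> last x l \in l.
Proof. by case: l => // e l _; exact: mem_last. Qed.

Lemma G_nodec4 a k w : w \in G a k -> forall x y, a + k <= x -> a + k <= y -> ~ chain4 (parcs x w y).
Proof.
move: k w; apply: G_ind.
- move=> x y _ _ [u [v [z [t [uA vA _ _ [uv _ _]]]]]].
  by move: uA vA uv; rewrite parcs_nil !inE => /eqP-> /eqP->; rewrite cr_irr.
- move=> k r rG IH x y xk yk; rewrite parcs_cons => /chain_top4 C.
  have Hr : forall e, e \in r -> e < a + k by move=> e /(G_mem rG); nlia.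
  apply: (IH (a + k) y) => //; first nlia.
  by apply: C; [apply: top_H1 => //; lia | apply: top_H2 => //; nlia].
- move=> k j l jk lG IH x y xk yk; rewrite parcs_cat => C.
  have l0 : l != [::] by apply/eqP => E; move: (G_size_w lG); rewrite E /=; nlia.
  have Hl : forall e, e \in l -> e < a + j by move=> e /(G_mem lG); nlia.
  have HD : forall e, e \in Dd (a + j) (k - j) -> a + j <= e.
    by move=> e; rewrite /Dd mem_rev mem_iota => /andP[].
  apply: (IH x (a + k)); [nlia|nlia|].
  apply: (chain_cat4 (u0 := (x, head (a + k) l)) (v0 := (last x l, a + k)) (f := (last (a + k) (Dd (a + j) (k - j)), y))) C.
  + by apply: (cat_H1 (b := a + j)) => //; nlia.
  + by apply: cat_H2; rewrite DdS; [exact: sorted_Dd | nlia].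
  + by rewrite /cr /= negb_and; apply/orP; right; nlia.
  + rewrite /cr /= negb_and; apply/orP; left.
    have := Hl _ (last_in x l0); rewrite -leqNgt.
    have : a + j <= last (a + k) (Dd (a + j) (k - j)).
      have := mem_last (a + k) (Dd (a + j) (k - j)); rewrite inE => /orP[/eqP->|/HD//]; nlia.
    nlia.
Qed.

Lemma head_in (z : nat) l : l != [::] -> head z l \in l.
Proof. by case: l => // e l _; rewrite inE eqxx. Qed.

Lemma sumn0 (s : seq nat) (f : nat -> nat) : (forall j, j \in s -> f j = 0) -> sumn (map f s) = 0.
Proof. by elim: s => //= j s IH H; rewrite H ?inE ?eqxx // IH // => i iS; apply: H; rewrite inE iS orbT. Qed.

Lemma last_parcs x l m : (last x l, m) \in parcs x l m.
Proof. by rewrite parcs_dec mem_rcons inE eqxx. Qed.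

Lemma head_parcs x l m : (x, head m l) \in parcs x l m.
Proof. by case: l => [|e l]; rewrite ?parcs_nil ?parcs_cons inE eqxx. Qed.

Lemma count_G3 a k : forall x y, a + k <= x -> a + k <= y ->
  count (fun w => ~~ dec3b (parcs x w y)) (G a k) = 2 ^ k.-1.
Proof.
elim/ltn_ind: k => [[|k]] IH x y xk yk.
  by rewrite G0 /= /dec3b /= /cr /= ltnn.
rewrite G_S count_cat count_map.
have E1 : count (preim (cons (a + k)) (fun w => ~~ dec3b (parcs x w y))) (G a k) =
          count (fun r => ~~ dec3b (parcs (a + k) r y)) (G a k).
  apply: eq_in_count => r rG /=; congr negb; rewrite parcs_cons.
  have Hr : forall e, e \in r -> e < a + k by move=> e /(G_mem rG); nlia.
  apply/dec3P/dec3P => [C|C]; last by apply: chain3_sub C => v vA; rewrite inE vA orbT.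
  by apply: chain_top3 C; [apply: top_H1 => //; nlia | apply: top_H2 => //; nlia].
rewrite E1 (IH k) //; try nlia.
rewrite count_flatten -map_comp.
case: k IH xk yk E1 => [|k] IH xk yk E1; first by [].
rewrite iotaS_r map_cat sumn_cat sumn0; last first.
  move=> j; rewrite mem_iota => /andP[j1 jk] /=.
  apply/eqP; rewrite -leqn0 leqNgt -has_count; apply/hasPn => w /mapP[l lG ->] /=.
  rewrite negbK parcs_cat.
  have l0 : l != [::] by apply/eqP => E; move: (G_size_w lG); rewrite E /=; nlia.
  have Hl : forall e, e \in l -> e < a + j by move=> e /(G_mem lG); nlia.
  have [d1 [D' ED]] : exists d1 D', Dd (a + j) (k.+1 - j) = d1 :: D'.
    rewrite /Dd; case E: (k.+1 - j) => [|n]; first nlia.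
    by rewrite iotaS_r rev_cat /=; exists (a + j + n), (rev (iota (a + j) n)).
  have d1m : a + j <= d1 < a + k.+1.
    have : d1 \in Dd (a + j) (k.+1 - j) by rewrite ED inE eqxx.
    rewrite /Dd mem_rev mem_iota; nlia.
  rewrite ED; apply/dec3P; exists (last x l, a + k.+1), (a + k.+1, d1), (x, head (a + k.+1) l); split.
  - by rewrite mem_cat last_parcs.
  - by rewrite mem_cat parcs_cons inE eqxx orbT.
  - by rewrite mem_cat head_parcs.
  - by rewrite /cr /=; have := Hl _ (last_in x l0); nlia.
  - by rewrite /cr /=; have := Hl _ (head_in (a + k.+1) l0); nlia.
rewrite add0n /= addn0 subnn.
have E2 : count (preim (fun l => l ++ [:: a + k.+1]) (fun w => ~~ dec3b (parcs x w y))) (G a k.+1) =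
          count (fun l => ~~ dec3b (parcs x l (a + k.+1))) (G a k.+1).
  apply: eq_in_count => l lG /=; congr negb; rewrite parcs_cat parcs_nil.
  have l0 : l != [::] by apply/eqP => E; move: (G_size_w lG); rewrite E /=; nlia.
  have Hl : forall e, e \in l -> e < a + k.+1 by move=> e /(G_mem lG); nlia.
  apply/dec3P/dec3P => [C|C]; last by apply: chain3_sub C => v vA; rewrite mem_cat vA.
  apply: (chain_cat3 (u0 := (x, head (a + k.+1) l)) (v0 := (last x l, a + k.+1)) (f := (a + k.+1, y))) C.
  + by apply: (cat_H1 (b := a + k.+1) (D := [::])) => //; nlia.
  + by move=> b; rewrite inE => /eqP.
  + by rewrite /cr /= negb_and; apply/orP; right; nlia.
  + by rewrite /cr /= negb_and; apply/orP; left; have := Hl _ (last_in x l0); nlia.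
rewrite add1n.
have -> : Dd (a + k.+1) 0 = [::] by [].
rewrite count_map E2 (IH k.+1) //; try nlia.
by rewrite /= expnS mul2n addnn.
Qed.

Lemma sub_iota (t : seq nat) m k : sorted ltn t -> all (fun x => m <= x < m + k) t -> subseq t (iota m k).
Proof.
elim: k m t => [|k IH] m [|x t] //=.
  by move=> _ /andP[H _]; exfalso; lia.
move=> St /andP[Hx Ht].
have At : all (fun y => x < y) t by have := order_path_min ltn_trans St.
case: eqP => [<-|ne].
  apply: IH; first exact: path_sorted St.
  apply/allP => y yt; move/allP: Ht => /(_ y yt); move/allP: At => /(_ y yt) /=; lia.
apply: IH => //=; rewrite (_ : x < m.+1 + k); last lia.
rewrite andbT; apply/andP; split; first by move: ne Hx => /eqP; lia.
apply/allP => y yt; move/allP: Ht => /(_ y yt); move/allP: At => /(_ y yt) /=.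
move: ne Hx => /eqP; lia.
Qed.

Lemma subseq_map_inv (T1 T2 : eqType) (f : T1 -> T2) t s :
  subseq t (map f s) -> exists2 t', subseq t' s & t = map f t'.
Proof.
move=> /subseqP[m sm ->]; exists (mask m s); first exact: mask_subseq.
by rewrite map_mask.
Qed.

Lemma rot_inv (P : seq nat -> Prop) (c : seq nat) s : s < size c ->
  (forall i, i < size c -> P (rot i (rot s c))) <-> (forall i, i < size c -> P (rot i c)).
Proof.
move=> sc; split => H i ic.
  have [i' [i'c Hi']] : exists i', i' < size c /\ i' + s = (if s <= i then i else i + size c).
    by exists (if s <= i then i - s else i + size c - s); case: (leqP s i) => H1; split; lia.
  have := H i' i'c; rewrite rot_add_mod ?(ltnW i'c) ?(ltnW sc) //.
  rewrite Hi'; case: (leqP s i) => si.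
    by rewrite (ltnW ic).
  case: leqP => h; last by rewrite addnK.
  have -> : i = 0 by lia.
  by rewrite add0n rot_size rot0.
rewrite rot_add_mod ?(ltnW ic) ?(ltnW sc) //.
case: leqP => cs.
  case: (ltngtP (i + s) (size c)) => E; [by apply: H|lia|].
  by rewrite E rot_size; have := H 0; rewrite rot0; apply; lia.
by apply: H; lia.
Qed.

Lemma traject_map (T : Type) (f : T -> T) x k : traject f (f x) k = map f (traject f x k).
Proof. by elim: k x => //= k IH x; rewrite IH. Qed.

Lemma traject_rot (T : Type) (f : T -> T) x k s : s <= k -> iter k f x = x ->
  traject f (iter s f x) k = rot s (traject f x k).
Proof.
move=> sk Hk.
have E1 : traject f x k = traject f x s ++ traject f (iter s f x) (k - s) by rewrite -trajectD subnKC.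
have E2 : traject f (iter s f x) k = traject f (iter s f x) (k - s) ++ traject f x s.
  by rewrite -{1}(subnK sk) trajectD -iterD (subnK sk) Hk.
rewrite E2 E1; move: (traject f x s) (size_traject f x s) => t <-; by rewrite rot_size_cat.
Qed.

Lemma zip_map2 (T U : Type) (f : T -> U) (g : T -> U) s :
  zip (map f s) (map g s) = map (fun x => (f x, g x)) s.
Proof. by elim: s => //= x s ->. Qed.

Definition topo n : 'I_n.+1 := ord_max.
Definition trj n (p : 'S_n.+1) := traject p (topo n) n.+1.
Definition scc n (z : 'I_n.+1) : nat := (z : nat).+1.
Definition Phi n (p : 'S_n.+1) : seq nat := map (@scc n) (traject p (p (topo n)) n).

Lemma cyc_facts n (p : 'S_n.+1) : is_cyclic p ->
  [/\ forall y, y \in trj p, iter n.+1 p (topo n) = topo n & uniq (trj p)].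
Proof.
move=> /cards1P[A HA].
have EA : forall y, porbit p y = A.
  by move=> y; apply/set1P; rewrite -HA; apply: imset_f.
have ally : forall y, y \in porbit p (topo n) by move=> y; rewrite EA -(EA y) porbit_id.
have card : #|porbit p (topo n)| = n.+1.
  have -> : porbit p (topo n) = setT by apply/setP => y; rewrite inE ally.
  by rewrite cardsT card_ord.
split.
- by move=> y; rewrite /trj; have := porbit_traject p (topo n) y; rewrite card => <-.
- by have := iter_porbit p (topo n); rewrite card.
- by have := uniq_traject_porbit p (topo n); rewrite card.
Qed.

Lemma Phi_cons n (p : 'S_n.+1) : n.+1 :: Phi p = map (@scc n) (trj p).
Proof. by rewrite /trj trajectS /= /scc /=. Qed.

Lemma map_S_iota m k : map S (iota m k) = iota m.+1 k.
Proof. by elim: k m => //= k IH m; rewrite IH. Qed.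

Lemma Phi_perm n (p : 'S_n.+1) : is_cyclic p -> perm_eq (Phi p) (iota 1 n).
Proof.
case/cyc_facts => Hall _ U.
have P1 : perm_eq (trj p) (enum 'I_n.+1) by apply: uniq_perm => // [|y]; rewrite ?enum_uniq ?mem_enum ?Hall.
have P2 : perm_eq (n.+1 :: Phi p) (iota 1 n.+1).
  rewrite Phi_cons -map_S_iota -val_enum_ord -map_comp.
  exact: perm_map P1.
rewrite -(perm_cons n.+1); apply: perm_trans P2 _.
by rewrite iotaS_r add1n perm_catC.
Qed.

Lemma size_Phi n (p : 'S_n.+1) : size (Phi p) = n.
Proof. by rewrite size_map size_traject. Qed.

Lemma traject_iota (T : Type) (f : T -> T) x k : traject f x k = map (fun j => iter j f x) (iota 0 k).
Proof.
apply: (eq_from_nth (x0 := x)); first by rewrite size_map size_iota size_traject.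
move=> i; rewrite size_traject => ik.
by rewrite nth_traject // (nth_map 0) ?size_iota // nth_iota.
Qed.

Lemma rot_avoid_Phi n (p : 'S_n.+1) : is_cyclic p ->
  rotations_avoid p pat1423 <-> (~ has231 (Phi p) /\ ~ has1423 (Phi p)).
Proof.
move=> cp; have [Hall It U] := cyc_facts cp.
have [s sn Es] : exists2 s, s < n.+1 & ord0 = iter s p (topo n) by apply/trajectP; exact: (Hall ord0).
have CF : cycle_form p = rot s (n.+1 :: Phi p).
  rewrite Phi_cons -map_rot /trj -traject_rot ?(ltnW sn) // -Es.
  rewrite /cycle_form traject_iota -map_comp; apply: eq_map => j /=.
  by rewrite /scc permX.
have Alt : all (fun x => x < n.+1) (Phi p).
  by apply/allP => x; rewrite (perm_mem (Phi_perm cp)) mem_iota; lia.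
rewrite -(rot_class Alt) size_Phi.
have Sz : size (n.+1 :: Phi p) = n.+1 by rewrite /= size_Phi.
have R := rot_inv (fun t => ~ has1423 t) (c := n.+1 :: Phi p) (s := s).
rewrite Sz in R; have {}R := R sn.
rewrite /rotations_avoid; split.
  move=> /forallP H; apply R => i ilt /=; apply/avoids1423; rewrite -CF; exact: (H (Ordinal ilt)).
move=> H; apply/forallP => i; apply/avoids1423; rewrite CF; exact: (proj2 R H i (ltn_ord i)).
Qed.

Lemma parcs_Phi n (p : 'S_n.+1) : is_cyclic p ->
  parcs n.+1 (Phi p) n.+1 = map (fun z : 'I_n.+1 => ((z : nat).+1, (p z : nat).+1)) (trj p).
Proof.
case/cyc_facts => _ It _.
have R : rcons (Phi p) n.+1 = map (@scc n) (map p (trj p)).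
  rewrite -traject_map trajectSr -iterSr It /Phi map_rcons; congr rcons.
by rewrite /parcs Phi_cons R -map_comp zip_map2.
Qed.

Definition dec3P_perm n (p : 'S_n.+1) :=
  exists x y z : 'I_n.+1, [/\ x < y, y < z, p z < p y & p y < p x].
Definition dec4P_perm n (p : 'S_n.+1) :=
  exists x y z t : 'I_n.+1, [/\ x < y, y < z, z < t & [/\ p t < p z, p z < p y & p y < p x]].

Lemma chain_Phi3 n (p : 'S_n.+1) : is_cyclic p ->
  chain3 (parcs n.+1 (Phi p) n.+1) <-> dec3P_perm p.
Proof.
move=> cp; have [Hall _ _] := cyc_facts cp; rewrite parcs_Phi //; split.
  move=> [u [v [w [/mapP[x _ ->] /mapP[y _ ->] /mapP[z _ ->]]]]].
  rewrite /cr /= !ltnS => /andP[xy yx] /andP[yz zy].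
  by exists x, y, z.
move=> [x [y [z [xy yz zy yx]]]].
exists ((x : nat).+1, (p x : nat).+1), ((y : nat).+1, (p y : nat).+1), ((z : nat).+1, (p z : nat).+1).
by split; rewrite ?(map_f _ (Hall _)) // /cr /= !ltnS ?xy ?yz ?zy ?yx.
Qed.

Lemma chain_Phi4 n (p : 'S_n.+1) : is_cyclic p ->
  dec4P_perm p -> chain4 (parcs n.+1 (Phi p) n.+1).
Proof.
move=> cp; have [Hall _ _] := cyc_facts cp; rewrite parcs_Phi //.
move=> [x [y [z [t [xy yz zt [tz zy yx]]]]]].
exists ((x : nat).+1, (p x : nat).+1), ((y : nat).+1, (p y : nat).+1), ((z : nat).+1, (p z : nat).+1),
  ((t : nat).+1, (p t : nat).+1).
by split; rewrite ?(map_f _ (Hall _)) //; split; rewrite /cr /= !ltnS ?xy ?yz ?zt ?tz ?zy ?yx.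
Qed.

Definition gol n (p : 'S_n.+1) (i : nat) : nat := (p (inord i) : nat).+1.

Lemma one_line_map n (p : 'S_n.+1) : one_line p = map (gol p) (iota 0 n.+1).
Proof.
by rewrite /one_line -val_enum_ord -map_comp; apply: eq_map => i /=; rewrite /gol inord_val.
Qed.

Lemma gol_ord n (p : 'S_n.+1) (x : 'I_n.+1) : gol p x = (p x : nat).+1.
Proof. by rewrite /gol inord_val. Qed.

Lemma ol_sub_inv n (p : 'S_n.+1) t : subseq t (one_line p) ->
  exists2 t', subseq t' (iota 0 n.+1) & t = map (gol p) t'.
Proof. by rewrite one_line_map; apply: subseq_map_inv. Qed.

Lemma sub_iota_sorted (t : seq nat) k : subseq t (iota 0 k) -> sorted ltn t /\ all (fun x => x < k) t.
Proof.
move=> S; split; first exact: (subseq_sorted ltn_trans S (iota_ltn_sorted 0 k)).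
by apply/allP => x /(mem_subseq S); rewrite mem_iota.
Qed.

Lemma avoid3_iff n (p : 'S_n.+1) : avoids (one_line p) (delta 3) <-> ~ dec3P_perm p.
Proof.
split.
  move=> A [x [y [z [xy yz zy yx]]]].
  have S : subseq [:: (x : nat); (y : nat); (z : nat)] (iota 0 n.+1).
    apply: sub_iota; first by rewrite /= xy yz.
    by rewrite /= !ltn_ord.
  have S2 := map_subseq (gol p) S; rewrite -one_line_map /= !gol_ord in S2.
  by have := avoids_sub A S2; rewrite so321 => /negP; apply; apply/andP; split; rewrite ltnS.
move=> N; apply: sub_avoids => t St; apply/negP => So.
have [a [b [c Et]]] := same_order3 (erefl : size (delta 3) = 3) So; subst t.
move: So; rewrite so321 => /andP[cb ba].
have [t' S' Et'] := ol_sub_inv St.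
have [St' At'] := sub_iota_sorted S'.
case: t' Et' St' At' {S'} => [|i [|j [|l [|? ?]]]] //= [Ea Eb Ec].
rewrite andbT => /andP[ij jl] /and4P[il jl' ll _].
apply: N; exists (inord i), (inord j), (inord l).
rewrite !inordK //; split => //.
  by rewrite -ltnS -/(gol p j) -/(gol p l) -Eb -Ec.
by rewrite -ltnS -/(gol p j) -/(gol p i) -Eb -Ea.
Qed.

Lemma same_order_nth t sg i j : same_order t sg -> i < size sg -> j < size sg ->
  (nth 0 t i < nth 0 t j) = (nth 0 sg i < nth 0 sg j).
Proof.
case/andP => _ /allP H ii jj.
have := H i; rewrite mem_iota add0n ii => /(_ erefl) /allP /(_ j).
by rewrite mem_iota add0n jj => /(_ erefl) /eqP.
Qed.

Lemma nth_delta k i : i < k -> nth 0 (delta k) i = k - i.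
Proof. by move=> ik; rewrite /delta nth_rev ?size_iota // nth_iota; lia. Qed.

Lemma size_delta k : size (delta k) = k.
Proof. by rewrite /delta size_rev size_iota. Qed.

Lemma avoidk n (p : 'S_n.+1) k : 4 <= k -> ~ avoids (one_line p) (delta k) -> dec4P_perm p.
Proof.
move=> k4 NA.
have [t [St So]] : exists t, subseq t (one_line p) /\ same_order t (delta k).
  move/negP: NA; rewrite /avoids negb_forall => /existsP[m]; rewrite negbK => H.
  by exists (mask m (one_line p)); rewrite mask_subseq.
have sz : size t = k by rewrite (size_same_order So) size_delta.
have D : forall i j, i < j < k -> nth 0 t j < nth 0 t i.
  move=> i j /andP[ij jk]; rewrite (same_order_nth So) ?size_delta; try lia.
  rewrite !nth_delta; lia.
have D01 := D 0 1; have D12 := D 1 2; have D23 := D 2 3.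
case: t St So sz D D01 D12 D23 => [|t0 [|t1 [|t2 [|t3 t']]]] St So sz D; rewrite /= in sz; try lia.
rewrite /= => D01 D12 D23.
have S4 : subseq [:: t0; t1; t2; t3] (one_line p).
  by apply: subseq_trans St; exact: (prefix_subseq [:: t0; t1; t2; t3] t').
have [u S' Eu] := ol_sub_inv S4.
have [Su Au] := sub_iota_sorted S'.
case: u Eu Su Au {S'} => [|i [|j [|l [|r [|? ?]]]]] //= [Ea Eb Ec Ed].
rewrite andbT => /and3P[ij jl lr] /and5P[ii jj ll rr _].
exists (inord i), (inord j), (inord l), (inord r).
rewrite !inordK //; split => //; split.
- by rewrite -ltnS -/(gol p r) -/(gol p l) -Ec -Ed; apply: D23; lia.
- by rewrite -ltnS -/(gol p l) -/(gol p j) -Eb -Ec; apply: D12; lia.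
- by rewrite -ltnS -/(gol p j) -/(gol p i) -Ea -Eb; apply: D01; lia.
Qed.

Lemma scc_inj n : injective (@scc n).
Proof. by move=> x y [] /val_inj. Qed.

Lemma Phi_inj n (p q : 'S_n.+1) : is_cyclic p -> is_cyclic q -> Phi p = Phi q -> p = q.
Proof.
move=> cp cq E.
have [Hp Itp _] := cyc_facts cp; have [Hq Itq _] := cyc_facts cq.
have ET : trj p = trj q.
  apply: (inj_map (@scc_inj n)); rewrite -!Phi_cons E //.
have key : forall j, j <= n.+1 -> iter j p (topo n) = iter j q (topo n).
  move=> j; rewrite leq_eqVlt => /orP[/eqP->|jn]; first by rewrite Itp Itq.
  by rewrite -(nth_traject _ jn) -(nth_traject _ jn) -/(trj p) -/(trj q) ET.
apply/permP => z; have [i ilt ->] := trajectP (Hp z).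
rewrite -iterS key // (key i) ?iterS //; exact: ltnW.
Qed.

Lemma Phi_surj n w : perm_eq w (iota 1 n) -> exists2 p : 'S_n.+1, is_cyclic p & Phi p = w.
Proof.
move=> Pw; set c := n.+1 :: w.
have Pc : perm_eq c (iota 1 n.+1) by rewrite iotaS_r add1n perm_sym perm_catC /= perm_cons perm_sym.
have Uc : uniq c by rewrite (perm_uniq Pc) iota_uniq.
have Mc : forall x, (x \in c) = (0 < x <= n.+1) by move=> x; rewrite (perm_mem Pc) mem_iota; lia.
have sw : size w = n by rewrite (perm_size Pw) size_iota.
pose f (z : 'I_n.+1) : 'I_n.+1 := inord ((next c (z : nat).+1).-1).
have fz : forall z, (f z : nat).+1 = next c (z : nat).+1.
  move=> z; have : next c (z : nat).+1 \in c by rewrite mem_next Mc; have := ltn_ord z; lia.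
  rewrite Mc => H; rewrite /f inordK; lia.
have finj : injective f.
  move=> z1 z2 E; apply: val_inj; apply: succn_inj; apply: (can_inj (prev_next Uc)).
  by rewrite -!fz E.
pose p := perm finj.
have pE : forall z, (p z : nat).+1 = next c (z : nat).+1 by move=> z; rewrite permE fz.
have nextc : forall i, i < n.+1 -> next c (nth 0 c i) = nth n.+1 w i.
  move=> i ilt; rewrite next_nth mem_nth ?index_uniq //= ?sw //.
have key : forall i, i < n.+1 -> (iter i p (topo n) : nat).+1 = nth 0 c i.
  elim=> [|i IH] ilt //=.
  rewrite pE IH; last lia.
  by rewrite nextc; [rewrite (set_nth_default 0) // sw; lia | lia].
have iterN : iter n.+1 p (topo n) = topo n.
  by apply: val_inj; apply: succn_inj; rewrite /= pE key // nextc // nth_default // sw.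
have TR : map (@scc n) (trj p) = c.
  apply: (eq_from_nth (x0 := 0)); first by rewrite size_map /trj size_traject /c /= sw.
  move=> i; rewrite size_map /trj size_traject => ilt.
  by rewrite (nth_map (topo n)) ?size_traject // nth_traject // /scc key.
exists p; last by move: TR; rewrite -Phi_cons /c; case.
have Hall : forall z, z \in porbit p (topo n).
  move=> z; have : (z : nat).+1 \in c by rewrite Mc; have := ltn_ord z; lia.
  rewrite -TR => /mapP[y /trajectP[i _ ->]] /scc_inj ->.
  by rewrite -permX mem_porbit.
have PO : porbits p = [set porbit p (topo n)].
  apply/setP => A; rewrite inE; apply/imsetP/eqP => [[z _ ->]|->]; last by exists (topo n).
  by apply/eqP; rewrite eq_porbit_mem.
by rewrite /is_cyclic PO cards1.
Qed.

Lemma rot_avoid_G m (p : 'S_m.+1) : is_cyclic p -> rotations_avoid p pat1423 = (Phi p \in G 1 m).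
Proof.
move=> cp; apply/idP/idP => [/(rot_avoid_Phi cp) [N1 N2]|PG].
  exact: G_complete (Phi_perm cp) N1 N2.
by apply/(rot_avoid_Phi cp); exact: G_class PG.
Qed.

Lemma a_circ_count m k (Q : pred (seq nat)) :
  (forall p : 'S_m.+1, is_cyclic p -> Phi p \in G 1 m -> avoids (one_line p) (delta k) = Q (Phi p)) ->
  a_circ m.+1 k = count Q (G 1 m).
Proof.
move=> HQ; rewrite /a_circ cardE -(size_map (@Phi m)) -size_filter.
set S := [set p : 'S_m.+1 | _].
have memS : forall p, (p \in S) = [&& is_cyclic p, Phi p \in G 1 m & Q (Phi p)].
  move=> p; rewrite inE; case: (boolP (is_cyclic p)) => //= cp.
  rewrite rot_avoid_G //; case: (boolP (Phi p \in G 1 m)) => PG; rewrite ?andbF ?andbT //.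
  by rewrite HQ.
apply: perm_size; apply: uniq_perm.
- rewrite map_inj_in_uniq ?enum_uniq // => p q; rewrite !mem_enum !memS.
  by move=> /and3P[cp _ _] /and3P[cq _ _]; apply: Phi_inj.
- by rewrite filter_uniq // G_uniq.
move=> w; rewrite mem_filter; apply/mapP/andP => [[p]|[Qw wG]].
  by rewrite mem_enum memS => /and3P[_ PG Qp] ->.
have [p cp Ep] := Phi_surj (G_perm wG).
by exists p => //; rewrite mem_enum memS cp Ep wG Qw.
Qed.

Theorem corollary3p2 :
  (forall n : nat, 3 <= n -> a_circ n 3 = 2 ^ (n - 2)) /\
  (forall n k : nat, 3 <= n -> 4 <= k -> a_circ n k = fib (2 * n - 3)).
Proof.
split.
  case=> [|m] // m3.
  rewrite (@a_circ_count m 3 (fun w => ~~ dec3b (parcs m.+1 w m.+1))).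
    rewrite count_G3; try lia.
    by congr (2 ^ _); lia.
  move=> p cp PG; apply/idP/idP => [A|ND].
    apply/negP => /dec3P /(chain_Phi3 cp) D; exact: (proj1 (avoid3_iff p) A D).
  apply/(avoid3_iff p) => /(chain_Phi3 cp) /dec3P D; by rewrite D in ND.
case=> [|m] // k m3 k4.
rewrite (@a_circ_count m k predT).
  rewrite count_predT size_G; last lia.
  by congr fib; lia.
move=> p cp PG /=; apply/idP/negP => NA.
have := G_nodec4 PG (x := m.+1) (y := m.+1); rewrite add1n => /(_ (leqnn _) (leqnn _)).
by apply; apply: chain_Phi4 => //; exact: (avoidk k4 NA).
Qed.
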